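(* Let $V=(J,(V_j)_{j\in J},d,H)$ be a hypergraph system, let $(\nu_e)_{e\in H}$ be a pseudorandom system of measures on $V$, and let $e\in H$. Let $0<\varepsilon<1$ and $0<\sigma<1/2$, let $I\subseteq\mathbb{R}$ be an interval, and let $G:V_e\to I$ be a function. Then, if $N$ is sufficiently large depending on $\varepsilon,\sigma$, there exists a $\sigma$-algebra $\mathcal{B}=\mathcal{B}_{\varepsilon,\sigma,e}(G)$ on $V_e$ with the following properties: (a) for every $\sigma$-algebra $\mathcal{B}'$ on $V_e$, $|G(x)-\mathbb{E}(G\mid\mathcal{B}\vee\mathcal{B}')(x)|\le\varepsilon$ for all $x\in V_e$; (b) $\mathcal{B}$ is generated by at most $O_{\varepsilon,I}(1)$ atoms; (c) for every atom $A$ of $\mathcal{B}$ there is a polynomial $P_A:\mathbb{R}\to\mathbb{R}$ of degree $O_{\varepsilon,\sigma,I}(1)$ with all coefficients $O_{\varepsilon,\sigma,I}(1)$, such that $P_A(y)=O(1)$ for all $y\in I$ and $$\mathbb{E}\big(|1_A(x)-P_A(G(x))|\,(\nu_e(x)+1)\mid x\in V_e\big)=O(\sigma).$$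
   Context: A hypergraph system is a quadruple $V=(J,(V_j)_{j\in J},d,H)$ where $J$ is a finite set, each $V_j$ is a finite nonempty set, $d\ge1$ is an integer and $H\subseteq\binom{J}{d}:=\{e\subseteq J:|e|=d\}$; for $e\subseteq J$ put $V_e:=\prod_{j\in e}V_j$. For a $\sigma$-algebra $\mathcal{B}$ on the finite set $V_e$ and $f:V_e\to\mathbb{R}$, $\mathbb{E}(f\mid\mathcal{B})(x)$ is the uniform average of $f$ over the atom of $\mathcal{B}$ containing $x$; $\mathcal{B}\vee\mathcal{B}'$ is the smallest $\sigma$-algebra containing both. For a finite nonempty set $Z$ and $f:Z\to\mathbb{R}$, $\mathbb{E}(f(x)\mid x\in Z):=|Z|^{-1}\sum_{x\in Z}f(x)$; constraints written after the bar mean uniform averaging over all tuples satisfying them. All objects depend on a parameter $N$ ranging over a sequence tending to infinity while $J,d,H$ are fixed; implicit constants may depend on $J$ (the constants in $O(\cdot)$ are absolute apart from this, and $O_y$ constants depend only on $y$ and $J$, not on $G$ or $N$). $o_{x\to0;y}(X)$ denotes a quantity bounded in magnitude by $c(x,y)X$ where $c(x,y)\to0$ as $x\to0$ for each fixed $y$; $O_y(X)$ a quantity bounded by $C(y)X$. Cube notation: for a finite set $e$, $\{0,1\}^e$ is the set of tuples $\omega=(\omega_j)_{j\in e}$ with $\omega_j\in\{0,1\}$, and $0^e$ is the all-zero tuple; for $x^{(0)}_J,x^{(1)}_J\in V_J$, $e\subseteq J$ and $\omega\in\{0,1\}^e$, set $x^{(\omega)}_e:=(x^{(\omega_j)}_j)_{j\in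 e}\in V_e$ and $x^{(a)}_e:=(x^{(a)}_j)_{j\in e}$ for $a\in\{0,1\}$. A system of measures is a family of functions $\nu_e:V_e\to[0,\infty)$, $e\in H$, with $\mathbb{E}(\nu_e(x_e)\mid x_e\in V_e)=1+o_{N\to\infty}(1)$. For $e\in H$ and $f:V_e\to\mathbb{R}$, $\mathcal{D}_ef(x^{(0)}_e):=\mathbb{E}\big(\prod_{\omega\in\{0,1\}^e,\ \omega\neq 0^e}f(x^{(\omega)}_e)\mid x^{(1)}_e\in V_e\big)$. The system is pseudorandom if: (i) $\mathcal{D}_e(\nu_e+1)(x_e)=O(1)$ for all $e\in H$, $x_e\in V_e$; (ii) for every choice of exponents $n_{e,\omega}\in\{0,1\}$, $\mathbb{E}\big(\prod_{e\in H}\prod_{\omega\in\{0,1\}^e}\nu_e(x^{(\omega)}_e)^{n_{e,\omega}}\mid x^{(0)}_J,x^{(1)}_J\in V_J\big)=1+o_{N\to\infty}(1)$; (iii) for every $e\in H$, $j\in e$, every choice of $n_{e,\omega}\in\{0,1\}$ and every integer $K\ge0$, $\mathbb{E}\Big(\mathbb{E}\big(\prod_{\omega\in\{0,1\}^e}\nu_e(x^{(\omega)}_e)^{n_{e,\omega}}\mid x^{(0)}_j,x^{(1)}_j\in V_j\big)^K\ \Big|\ x^{(0)}_{e\setminus\{j\}},x^{(1)}_{e\setminus\{j\}}\in V_{e\setminus\{j\}}\Big)=O_K(1)$. *)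

(* Defs.v *)
From HB Require Import structures.
From mathcomp Require Import all_boot all_order all_algebra.
From mathcomp Require Import reals.
Set Implicit Arguments. Unset Strict Implicit. Unset Printing Implicit Defensive.
Import Order.TTheory GRing.Theory Num.Theory.
Local Open Scope ring_scope.

Section Defs.
Variable R : realType.

Definition avg (T : finType) (f : T -> R) : R :=
  (\sum_(x : T) f x) / #|T|%:R.
Definition avg_on (T : finType) (A : {set T}) (f : T -> R) : R :=
  (\sum_(x in A) f x) / #|A|%:R.

Definition tends_to_one (a : nat -> R) : Prop :=
  forall eta : R, 0 < eta -> exists N0 : nat, forall n, (N0 <= n)%N -> `|a n - 1| <= eta.

Definition sigma_algebra (T : finType) (S : {set {set T}}) : bool :=
  [&& set0 \in S, [forall A in S, ~: A \in S] &
      [forall A in S, forall B in S, A :|: B \in S]].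

Definition is_atom (T : finType) (S : {set {set T}}) (A : {set T}) : bool :=
  [&& A \in S, A != set0 &
      [forall B in S, (B \subset A) ==> ((B == set0) || (B == A))]].
Definition atoms (T : finType) (S : {set {set T}}) : {set {set T}} :=
  [set A in S | is_atom S A].

Definition atom_of (T : finType) (S : {set {set T}}) (x : T) : {set T} :=
  \bigcap_(A in S | x \in A) A.

Definition condE (T : finType) (S : {set {set T}}) (f : T -> R) (x : T) : R :=
  avg_on (atom_of S x) f.

Definition join_sa (T : finType) (S S' : {set {set T}}) : {set {set T}} :=
  \bigcap_(U : {set {set T}} | [&& sigma_algebra U, S \subset U & S' \subset U]) U.

End Defs.

(* The finite nonempty vertex sets V_j (at stage n of the sequence N -> oo)
   are modelled, up to relabelling, by the ordinals 'I_(V n j). *)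
Section Hyp.
Variable J : finType.
Variable V : nat -> J -> nat.

Definition VJ (n : nat) := {dffun forall j : J, 'I_(V n j)}.
Definition Ve (n : nat) (e : {set J}) :=
  {dffun forall j : {i : J | i \in e}, 'I_(V n (sval j))}.

Definition restr (n : nat) (e : {set J}) (x : VJ n) : Ve n e :=
  @finfun _ (fun j : {i : J | i \in e} => 'I_(V n (sval j))) (fun j => x (sval j)).

(* cube points: omega in {0,1}^e is encoded as the subset of e where it is 1 *)
Definition cubeJ (n : nat) (x0 x1 : VJ n) (w : {set J}) : VJ n :=
  @finfun _ (fun j : J => 'I_(V n j)) (fun i => if i \in w then x1 i else x0 i).
Definition cubeE (n : nat) (e : {set J}) (x0 x1 : Ve n e) (w : {set J}) : Ve n e :=
  @finfun _ (fun j : {i : J | i \in e} => 'I_(V n (sval j)))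
    (fun i => if sval i \in w then x1 i else x0 i).
Definition updJ (n : nat) (j : J) (x y : VJ n) : VJ n :=
  @finfun _ (fun j : J => 'I_(V n j)) (fun i => if i == j then y i else x i).
End Hyp.

Definition hypergraph_system (J : finType) (d : nat) (H : {set {set J}}) : Prop :=
  (1 <= d)%N /\ forall e, e \in H -> #|e| = d.

Section Pseudo.
Variable R : realType.
Variable J : finType.
Variable V : nat -> J -> nat.
Variable H : {set {set J}}.
Variable nu : forall (n : nat) (e : {set J}), Ve V n e -> R.

Definition Dop (n : nat) (e : {set J}) (f : Ve V n e -> R) (x0 : Ve V n e) : R :=
  avg (fun x1 : Ve V n e => \prod_(w in powerset e | w != set0) f (cubeE x0 x1 w)).

Definition system_of_measures : Prop :=
  (forall n e x, 0 <= nu (n := n) (e := e) x) /\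
  (forall e, e \in H -> tends_to_one (fun n => avg (@nu n e))).

(* C1 : the O(1) constant of (i); CK K : the O_K(1) constant of (iii) *)
Definition pseudorandom (C1 : R) (CK : nat -> R) : Prop :=
  system_of_measures /\
  (* (i) *)
  (forall n e, e \in H -> forall x : Ve V n e,
      `|Dop (fun y => nu y + 1) x| <= C1) /\
  (* (ii) *)
  (forall ex : {set J} -> {set J} -> bool,
      tends_to_one (fun n =>
        avg (fun p : VJ V n * VJ V n =>
          \prod_(e in H) \prod_(w in powerset e)
             (nu (restr e (cubeJ p.1 p.2 w))) ^+ ex e w))) /\
  (* (iii) *)
  (forall e, e \in H -> forall j, j \in e -> forall ex : {set J} -> bool,
     forall K : nat, forall n,
      `| avg (fun p : VJ V n * VJ V n =>
           (avg (fun q : VJ V n * VJ V n =>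
              \prod_(w in powerset e)
                (nu (restr e (cubeJ (updJ j p.1 q.1) (updJ j p.2 q.2) w))) ^+ ex w))
           ^+ K) | <= CK K).
End Pseudo.

(* Main.v *)
Require Import Defs.
From HB Require Import structures.
From mathcomp Require Import all_boot all_order all_algebra.
From mathcomp Require Import reals.
From mathcomp Require Import ring lra zify.
From Stdlib Require Import Classical.
Import Order.TTheory GRing.Theory Num.Theory.
Set Implicit Arguments. Unset Strict Implicit.
Local Open Scope ring_scope.
Section Phi.
Variable R : realType.
Implicit Types s d : R.

Definition phi s : R := s * s * (3 - 2 * s).

Lemma phi_01 s : 0 <= s <= 1 -> 0 <= phi s <= 1.
Proof.
case/andP=> h0 h1; rewrite /phi; apply/andP; split.
  apply: mulr_ge0; [exact: mulr_ge0| lra].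
have: 0 <= (1 - s) * (1 - s) * (1 + 2 * s).
  apply: mulr_ge0; [apply: mulr_ge0; lra| lra].
move=> h; nra.
Qed.

Lemma phi_sym s : phi (1 - s) = 1 - phi s.
Proof. rewrite /phi; ring. Qed.

Lemma phi_low d s : 0 <= d -> 0 <= s <= 1/2 - d -> 0 <= phi s <= (1 - d) * s.
Proof.
move=> hd; case/andP=> h0 h1; rewrite /phi; apply/andP; split.
  apply: mulr_ge0; [exact: mulr_ge0| lra].
have hq := sqr_ge0 (1/2 - s).
have h2 : 3 * s - 2 * s * s - 1 + d <= 0 by nra.
nra.
Qed.

Lemma iter_low d s k : 0 < d -> 0 <= s <= 1/2 - d ->
  0 <= iter k phi s <= (1 - d) ^+ k * s /\ iter k phi s <= s.
Proof.
move=> hd hs; have [h0 h1] := andP hs.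
elim: k => [|k [/andP[i0 i1] i2]] /=; first by rewrite expr0 mul1r lexx h0.
have hk : 0 <= iter k phi s <= 1/2 - d by rewrite i0 /=; lra.
have /andP[j0 j1] := (phi_low (ltW hd) hk).
have hp : 0 <= (1 - d) ^+ k <= 1.
  apply/andP; split; first by apply: exprn_ge0; lra.
  by apply: exprn_ile1; lra.
rewrite exprS j0 /=; split.
  by apply: (le_trans j1); rewrite -mulrA; apply: ler_wpM2l => //; lra.
apply: (le_trans j1); nra.
Qed.

Lemma bern d k : 0 <= d <= 1 -> (1 - d) ^+ k * (1 + k%:R * d) <= 1.
Proof.
case/andP=> h0 h1; elim: k => [|k IH]; first by rewrite expr0 mul0r addr0 mul1r.
have hp : 0 <= (1 - d) ^+ k by apply: exprn_ge0; lra.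
have key : (1 - d) * (1 + k.+1%:R * d) <= 1 + k%:R * d.
  rewrite -natr1; have : 0 <= (k%:R + 1) * d * d :> R.
    by apply: mulr_ge0 => //; apply: mulr_ge0 => //; have := ler0n R k; lra.
  rewrite (_ : (1 - d) * (1 + (k%:R + 1) * d) = 1 + k%:R * d - (k%:R + 1) * d * d); last ring.
  lra.
rewrite exprS (_ : (1 - d) * (1 - d) ^+ k * (1 + k.+1%:R * d) =
   (1 - d) ^+ k * ((1 - d) * (1 + k.+1%:R * d))); last ring.
apply: le_trans IH; exact: ler_wpM2l.
Qed.

Lemma iter_sym s k : iter k phi (1 - s) = 1 - iter k phi s.
Proof. elim: k => //= k ->; exact: phi_sym. Qed.

Lemma iter_01 s k : 0 <= s <= 1 -> 0 <= iter k phi s <= 1.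
Proof. move=> h; elim: k => //= k IH; exact: phi_01. Qed.

Lemma step_exists d sg : 0 < d -> 0 < sg -> exists K : nat, forall s, 0 <= s <= 1 ->
  (s <= 1/2 - d -> iter K phi s <= sg) /\ (1/2 + d <= s -> 1 - sg <= iter K phi s).
Proof.
move=> hd hsg.
have low : forall s, 0 <= s <= 1/2 - d -> iter (Num.truncn (1/(sg * d))).+1 phi s <= sg.
  move=> s hs; set K := (Num.truncn (1/(sg * d))).+1.
  have hK : 1/(sg * d) < K%:R by exact: truncnS_gt.
  have hsd : 0 < sg * d by apply: mulr_gt0.
  have hK2 : 1 < K%:R * d * sg.
    move: hK; rewrite ltr_pdivrMr // => h; nra.
  have [/andP[i0 i1] _] := iter_low K hd hs.
  have hd1 : 0 <= d <= 1 by move: hs => /andP[a b]; apply/andP; split; lra.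
  have hb := bern K hd1.
  have hp : 0 <= (1 - d) ^+ K by apply: exprn_ge0; case/andP: hd1 => _ ?; lra.
  have hs1 : s <= 1 by case/andP: hs => _ ?; lra.
  have hx : (1 - d) ^+ K <= sg by nra.
  apply: (le_trans i1); case/andP: hs => s0 _; nra.
exists (Num.truncn (1/(sg * d))).+1 => s hs; split.
  by move=> h; apply: low; case/andP: hs => ? ?; apply/andP; split; lra.
move=> hs2; have : 0 <= 1 - s <= 1/2 - d by case/andP: hs => ? ?; apply/andP; split; lra.
move/low; rewrite iter_sym; lra.
Qed.
End Phi.
Arguments phi {R}.
Section Poly.
Variable R : realType.
Definition phiP : {poly R} := 'X * 'X * (3%:P - 2%:P * 'X).
Lemma phiPE s : phiP.[s] = phi s.
Proof. by rewrite /phiP /phi !hornerE. Qed.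
Definition iterP K : {poly R} := iter K (fun p => phiP \Po p) 'X.
Lemma iterPE K s : (iterP K).[s] = iter K phi s.
Proof. elim: K => [|K IH] /=; first by rewrite hornerX. by rewrite horner_comp -IH phiPE. Qed.
Definition affP (al be : R) : {poly R} := al *: 'X + be%:P.
Lemma affPE al be s : (affP al be).[s] = al * s + be.
Proof. by rewrite /affP !hornerE. Qed.
End Poly.
Section CondE.
Variables (R : realType) (T : finType).

Lemma join_mem (S S' : {set {set T}}) A : A \in S -> A \in join_sa S S'.
Proof.
move=> hA; rewrite /join_sa; apply/bigcapP => U /and3P[_ hS _].
exact: (subsetP hS).
Qed.

Lemma condE_close (S : {set {set T}}) (f : T -> R) x A eps :
  A \in S -> x \in A -> (forall y, y \in A -> `|f x - f y| <= eps) ->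
  `|f x - condE S f x| <= eps.
Proof.
move=> hA hx hf; rewrite /condE /avg_on.
set Z := atom_of S x.
have hxZ : x \in Z by apply/bigcapP => B /andP[].
have hZA : Z \subset A by apply: bigcap_inf; rewrite hA hx.
have hc : (0 < #|Z|)%N by apply/card_gt0P; exists x.
have hcR : (0 : R) < #|Z|%:R by rewrite ltr0n.
have -> : f x - (\sum_(y in Z) f y) / #|Z|%:R = (\sum_(y in Z) (f x - f y)) / #|Z|%:R.
  rewrite sumrB sumr_const mulrBl; congr (_ - _).
  by rewrite -[f x *+ _]mulr_natr mulfK // pnatr_eq0 -lt0n.
rewrite normf_div (gtr0_norm hcR) ler_pdivrMr //.
apply: (le_trans (ler_norm_sum _ _ _)).
rewrite mulr_natr -sumr_const; apply: ler_sum => y hy.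
by apply: hf; apply: (subsetP hZA).
Qed.
End CondE.
Section Cuts.
Variables (R : realType) (M W : nat).
Hypotheses (M0 : (0 < M)%N) (W0 : (0 < W)%N).

Definition dl : R := 1 / (2 * M%:R * W%:R).
Definition cc (k i : nat) : R := k%:R / M%:R + (2 * i%:R + 1) * dl.

Lemma dl_gt0 : 0 < dl.
Proof. rewrite /dl divr_gt0 // !mulr_gt0 // ltr0n //. Qed.

Lemma cc_bounds k (i : 'I_W) : k%:R / M%:R + dl <= cc k i <= (k.+1)%:R / M%:R - dl.
Proof.
have hM : (0 : R) < M%:R by rewrite ltr0n.
have hW : (0 : R) < W%:R by rewrite ltr0n.
have e : 2 * W%:R * dl = 1 / M%:R.
  rewrite /dl; field; apply/andP; split; rewrite ?pnatr_eq0 -?lt0n //.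
have hi : i%:R + 1 <= W%:R :> R by rewrite natr1 ler_nat.
have hd := dl_gt0; have hi0 : (0:R) <= i%:R by apply: ler0n.
have e2 : (k.+1)%:R / M%:R = k%:R / M%:R + 2 * W%:R * dl.
  by rewrite e -natr1 mulrDl.
rewrite /cc e2; apply/andP; split; nra.
Qed.

Section Part.
Variables (T : finType) (tx : T -> R) (ch : nat -> 'I_W).
Hypotheses (t0 : forall x, 0 <= tx x) (t1 : forall x, tx x < 1).

Definition cut k := cc k (ch k).
Definition above k x := (k == 0)%N || ((k < M)%N && (cut k <= tx x)).
Definition Aset k := [set x | above k x && ~~ above k.+1 x].

Lemma above_mono x j k : (j <= k)%N -> above k x -> above j x.
Proof.
rewrite /above; case: (eqVneq j 0%N) => [->//|hj] /= hjk.
have hk : k != 0%N by apply/eqP => hk; move: hjk; rewrite hk; lia.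
rewrite (negbTE hk) /= => /andP[hkM hc]; apply/andP; split; first lia.
apply: le_trans hc; case: (ltngtP j k) => hjk2; [| lia | by rewrite hjk2].
have := cc_bounds j (ch j); have := cc_bounds k (ch k).
have : (j.+1)%:R / M%:R <= k%:R / M%:R :> R.
  by rewrite ler_pM2r ?invr_gt0 ?ltr0n // ler_nat.
rewrite /cut => ? /andP[? ?] /andP[? ?]; have := dl_gt0; lra.
Qed.

Lemma aboveM x k : (M <= k)%N -> ~~ above k x.
Proof. move=> h; rewrite /above; apply/negP => /orP[/eqP|/andP[]]; lia. Qed.

Lemma part_aux x d : forall m, (M - m <= d)%N -> (m < M)%N -> above m x ->
  exists k : 'I_M, x \in Aset k.
Proof.
elim: d => [|d IH] m hd hm ha; first lia.
case: (boolP (above m.+1 x)) => h.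
  apply: (IH m.+1) => //; first lia.
  by case: (ltnP m.+1 M) => // hM; move: (aboveM x hM); rewrite h.
by exists (Ordinal hm); rewrite inE ha h.
Qed.

Lemma part x : exists k : 'I_M, x \in Aset k.
Proof. apply: (part_aux (d := M) (m := 0%N)); [lia | exact: M0 | by []]. Qed.

Lemma part_uniq x (j k : 'I_M) : x \in Aset j -> x \in Aset k -> j = k.
Proof.
rewrite !inE => /andP[hj hj'] /andP[hk hk'].
case: (ltngtP j k) => h; last by apply: val_inj.
  by move: hj'; rewrite (above_mono (j := j.+1) h hk).
by move: hk'; rewrite (above_mono (j := k.+1) h hj).
Qed.

Lemma osc x (k : 'I_M) : x \in Aset k ->
  k%:R / M%:R <= tx x < (k.+2)%:R / M%:R.
Proof.
have hM : (0 : R) < M%:R by rewrite ltr0n.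
have hd := dl_gt0.
rewrite inE /above => /andP[h1 h2]; apply/andP; split.
  case: (eqVneq (val k) 0%N) h1 => [-> _|hk /=]; first by rewrite mul0r.
  move=> /andP[_ hc]; apply: le_trans hc; rewrite /cut.
  have := cc_bounds k (ch k); lra.
move: h2; rewrite /= negb_and; case: (ltnP k.+1 M) => hk /=.
  rewrite -ltNge => hc; apply: (lt_le_trans hc); rewrite /cut.
  have := cc_bounds k.+1 (ch k.+1); lra.
move=> _; apply: (lt_le_trans (t1 x)).
by rewrite ler_pdivlMr // mul1r ler_nat; lia.
Qed.

Definition Bsa : {set {set T}} :=
  [set U : {set T} | [forall k : 'I_M, (Aset k \subset U) || [disjoint Aset k & U]]].

Lemma Bsa_sigma : sigma_algebra Bsa.
Proof.
apply/and3P; split.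
- by rewrite inE; apply/forallP => k; rewrite disjoints_subset setC0 subsetT orbT.
- apply/forallP => U; apply/implyP; rewrite !inE => /forallP hU.
  apply/forallP => k; have := hU k.
  by rewrite !disjoints_subset setCK orbC.
- apply/forallP => U; apply/implyP; rewrite inE => /forallP hU.
  apply/forallP => V; apply/implyP; rewrite inE => /forallP hV.
  rewrite inE; apply/forallP => k.
  case/orP: (hU k) => hUk.
    by rewrite (subset_trans hUk (subsetUl U V)).
  case/orP: (hV k) => hVk.
    by rewrite (subset_trans hVk (subsetUr U V)).
  by move: hUk hVk; rewrite !disjoints_subset setCU subsetI => -> ->; rewrite orbT.
Qed.

Lemma Aset_in_B (k : 'I_M) : Aset k \in Bsa.
Proof.
rewrite inE; apply/forallP => j; case: (eqVneq j k) => [->|hjk]; first by rewrite subxx.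
apply/orP; right; apply/pred0P => x /=.
apply/negP => /andP[hj hk]; apply: (negP hjk); apply/eqP; exact: part_uniq hj hk.
Qed.

Lemma atoms_B A : is_atom Bsa A -> exists k : 'I_M, A = Aset k.
Proof.
case/and3P => hA hA0 /forallP hmin.
have [x hx] := set0Pn _ hA0.
have [k hk] := part x; exists k.
move: hA; rewrite inE => /forallP /(_ k) /orP[hsub|hdis]; last first.
  by move: hdis => /pred0P /(_ x) /=; rewrite hk hx.
have := hmin (Aset k); rewrite Aset_in_B hsub /= => /orP[/eqP h0|/eqP ->] //.
by move: hk; rewrite h0 inE.
Qed.

Lemma card_atoms : (#|atoms Bsa| <= M)%N.
Proof.
have : atoms Bsa \subset [set Aset (val k) | k : 'I_M].
  apply/subsetP => A; rewrite inE => /andP[_ /atoms_B [k ->]].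
  by apply/imsetP; exists k.
move/subset_leq_card => h; apply: (leq_trans h).
by rewrite (leq_trans (leq_imset_card _ _)) // card_ord.
Qed.
End Part.

Section Weight.
Variables (T : finType) (tx : T -> R) (w : T -> R).
Hypotheses (t0 : forall x, 0 <= tx x) (t1 : forall x, tx x < 1)
  (hw : forall x, 0 <= w x) (htot : avg w <= 3).

Definition win (k i : nat) (x : T) : R := if `|tx x - cc k i| < dl then 1 else 0.
Definition mass (k i : nat) : R := avg (fun x => win k i x * w x).

Lemma win01 k i x : 0 <= win k i x <= 1.
Proof. by rewrite /win; case: ifP; rewrite ?lexx ?ler01. Qed.

Lemma win_sum k x : \sum_(i < W) win k i x <= 1.
Proof.
case: (pickP (fun i : 'I_W => `|tx x - cc k i| < dl)) => [i0 hi0|hn]; last first.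
  by rewrite big1 ?ler01 // => i _; rewrite /win hn.
rewrite (bigD1 i0) //= big1; first by rewrite addr0 /win hi0.
move=> i hi.
rewrite /win; case: ifP => // hi1.
exfalso.
move: hi0 hi1; rewrite !ltr_norml /cc => /andP[a1 a2] /andP[b1 b2].
have hd := dl_gt0.
have : (i : nat) <> i0 by move=> h; move/eqP: hi; apply; apply: val_inj.
case: (ltngtP i i0) => // h _.
  have : (i.+1)%:R <= i0%:R :> R by rewrite ler_nat.
  rewrite -natr1 => h2; nra.
have : (i0.+1)%:R <= i%:R :> R by rewrite ler_nat.
rewrite -natr1 => h2; nra.
Qed.

Lemma avg_le (f g : T -> R) : (forall x, f x <= g x) -> avg f <= avg g.
Proof. move=> h; rewrite /avg ler_wpM2r ?invr_ge0 ?ler0n //; exact: ler_sum. Qed.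
Lemma avgD (f g : T -> R) : avg (fun x => f x + g x) = avg f + avg g.
Proof. by rewrite /avg big_split mulrDl. Qed.
Lemma avgZ c (f : T -> R) : avg (fun x => c * f x) = c * avg f.
Proof. by rewrite /avg -mulr_sumr mulrA. Qed.

Lemma pigeon k : exists i : 'I_W, mass k i <= 3 / W%:R.
Proof.
case: (pickP (fun i : 'I_W => mass k i <= 3 / W%:R)) => [i hi|hn]; first by exists i.
exfalso.
have hW : (0 : R) < W%:R by rewrite ltr0n.
have h1 : \sum_(i < W) (3 / W%:R) < \sum_(i < W) mass k i.
  apply: ltr_sum; first by apply/hasP; exists (Ordinal W0); rewrite ?mem_index_enum.
  by move=> i _; rewrite ltNge hn.
have h2 : \sum_(i < W) mass k i <= avg w.
  rewrite /mass /avg -mulr_suml ler_wpM2r ?invr_ge0 ?ler0n //.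
  rewrite exchange_big /=; apply: ler_sum => x _.
  rewrite -mulr_suml; have := win_sum k x; have := hw x.
  have : 0 <= \sum_(i < W) win k i x by apply: sumr_ge0 => i _; case/andP: (win01 k i x).
  nra.
move: h1; rewrite sumr_const card_ord => h1.
have e : (3 / W%:R) *+ W = 3 :> R.
  by rewrite -mulr_natr mulrAC -mulrA mulfV ?mulr1 // lt0r_neq0.
rewrite e in h1; have := lt_le_trans h1 (le_trans h2 htot); by rewrite ltxx.
Qed.

Lemma b2R (b : bool) : (b%:R : R) = if b then 1 else 0.
Proof. by case: b. Qed.

Ltac fixH H := let T := type of H in match T with
 | is_true (@Order.le _ _ ?a ?b) => let h := fresh in have h : (a <= b :> R) by exact H; clear H; rename h into H
 | is_true (@Order.lt _ _ ?a ?b) => let h := fresh in have h : (a < b :> R) by exact H; clear H; rename h into H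
 end.
Ltac lraR := match goal with
 | |- is_true (@Order.le _ _ ?a ?b) => let h := fresh in have h : (a <= b :> R) by lra; exact h
 | |- is_true (@Order.lt _ _ ?a ?b) => let h := fresh in have h : (a < b :> R) by lra; exact h
 | _ => lra end.

Section Step.
Variables (ch : nat -> 'I_W) (K : nat) (sg : R).
Hypotheses (hsg : 0 < sg) (hK : forall s, 0 <= s <= 1 ->
  (s <= 1/2 - dl/2 -> iter K phi s <= sg) /\ (1/2 + dl/2 <= s -> 1 - sg <= iter K phi s)).

Definition stepv (k : nat) (t : R) : R :=
  if k == 0%N then 1 else if (M <= k)%N then 0 else iter K phi ((t - cut ch k)/2 + 1/2).

Lemma cut_01 k : (k < M)%N -> 0 <= cut ch k <= 1 - dl.
Proof.
move=> hk; have := cc_bounds k (ch k); rewrite /cut => /andP[h1 h2].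
have hM : (0 : R) < M%:R by rewrite ltr0n.
have a : 0 <= k%:R / M%:R :> R by rewrite divr_ge0 ?ler0n.
have b : (k.+1)%:R / M%:R <= 1 :> R by rewrite ler_pdivrMr // mul1r ler_nat.
have hd := dl_gt0; apply/andP; split; lra.
Qed.

Lemma stepv_bd k t : 0 <= t <= 1 -> 0 <= stepv k t <= 1.
Proof.
move=> ht; rewrite /stepv; case: ifP => _; first by rewrite ler01 lexx.
case: ifP => hk; first by rewrite lexx ler01.
apply: iter_01; have hc : 0 <= cut ch k <= 1 - dl by apply: cut_01; rewrite ltnNge hk.
have hd := dl_gt0; apply/andP; split; lra.
Qed.

Lemma err_pt k x : `|(above tx ch k x)%:R - stepv k (tx x)| <= sg + win k (ch k) x.
Proof.
have /andP[hw0 hw1] := win01 k (ch k) x; have hd := dl_gt0; have hsg0 := hsg.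
have ht : 0 <= tx x <= 1 by rewrite t0 ltW.
have ht0 := t0 x; have ht1 := t1 x.
rewrite b2R /above /stepv; case: (eqVneq k 0%N) => [_|hk0] /=.
  rewrite subrr normr0; apply: addr_ge0 => //; exact: ltW.
case: (ltnP k M) => hkM /=; last by rewrite subrr normr0; apply: addr_ge0 => //; exact: ltW.
have /andP[hc0 hc1] := cut_01 hkM.
rewrite /win (_ : cc k (ch k) = cut ch k) //.
move: (cut ch k) hc0 hc1 => c hc0 hc1.
have hs : 0 <= (tx x - c) / 2 + 1 / 2 <= 1 by apply/andP; split; lra.
have /andP[hi0 hi1] := iter_01 K hs.
fixH hi0; fixH hi1.
have [hlo hhi] := hK hs.
have [z ez] : exists z, z = iter K phi ((tx x - c) / 2 + 1 / 2) by eexists.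
rewrite -ez in hi0 hi1 hlo hhi *.
case: ifP => h1; case: ifP => h2; rewrite ler_norml; apply/andP; split.
all: try lra.
- move/negbT: h2; rewrite -leNgt ger0_norm ?subr_ge0 // => h2.
  have : 1/2 + dl/2 <= (tx x - c) / 2 + 1 / 2 by lra.
  move/hhi => h; lra.
- move/negbT: h1; rewrite -ltNge => h1.
  move/negbT: h2; rewrite -leNgt ltr0_norm ?subr_lt0 // opprB => h2.
  have : (tx x - c) / 2 + 1 / 2 <= 1/2 - dl/2 by lra.
  move/hlo => h; lra.
Qed.

Lemma atom_err (k : 'I_M) : (forall j, mass j (ch j) <= 3 / W%:R) ->
  avg (fun x => `|(x \in Aset tx ch k)%:R - (stepv k (tx x) - stepv k.+1 (tx x))| * w x)
    <= 6 * sg + 6 / W%:R.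
Proof.
move=> hch; have hsg1 := hsg; have htot1 := htot.
have pt : forall x, `|(x \in Aset tx ch k)%:R - (stepv k (tx x) - stepv k.+1 (tx x))| * w x <=
   2 * sg * w x + (win k (ch k) x * w x + win k.+1 (ch k.+1) x * w x).
  move=> x.
  have e : (x \in Aset tx ch k)%:R = (above tx ch k x)%:R - (above tx ch k.+1 x)%:R :> R.
    rewrite inE !b2R; case: (boolP (above tx ch k.+1 x)) => h.
      by rewrite (above_mono (j := k) (leqnSn k) h) /= subrr.
    by rewrite andbT subr0.
  rewrite e; have h1 := err_pt k x; have h2 := err_pt k.+1 x.
  set a1 := (above tx ch k x)%:R in h1 *; set a2 := (above tx ch k.+1 x)%:R in h2 *.
  have h3 : `|a1 - a2 - (stepv k (tx x) - stepv k.+1 (tx x))| <=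
     `|a1 - stepv k (tx x)| + `|a2 - stepv k.+1 (tx x)|.
    rewrite (_ : a1 - a2 - _ = (a1 - stepv k (tx x)) - (a2 - stepv k.+1 (tx x))); last ring.
    exact: ler_normB.
  have := hw x; nra.
apply: (le_trans (avg_le pt)); rewrite avgD avgD avgZ.
have := hch k; have := hch k.+1; rewrite /mass => ha hb.
have : 0 <= sg by lra.
move=> hsg0; have hh : 2 * sg * avg w <= 2 * sg * 3 by rewrite ler_wpM2l // ?mulr_ge0.
have e : 6 / W%:R = 3 / W%:R + 3 / W%:R :> R by rewrite -mulrDl; congr (_ / _); lra.
rewrite e; lra.
Qed.
End Step.
End Weight.
End Cuts.

Definition SP (R : realType) (a L : R) (M W K k i : nat) : {poly R} :=
  if k == 0%N then 1 else if (M <= k)%N then 0 else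
  iterP R K \Po affP (1 / (2 * L)) (1/2 - (a / L + cc R M W k i) / 2).

Lemma SPE (R : realType) (a L : R) (M W K : nat) (ch : nat -> 'I_W) k y :
  L != 0 -> (SP a L M W K k (ch k)).[y] = stepv M ch K k ((y - a) / L).
Proof.
move=> hL; rewrite /SP /stepv; case: ifP => _; first by rewrite hornerC.
case: ifP => _; first by rewrite hornerC.
rewrite horner_comp iterPE affPE /cut; congr (iter K phi _); field; exact: hL.
Qed.

Lemma le_sum_term (R : realType) (I : finType) (F : I -> R) i :
  (forall j, 0 <= F j) -> F i <= \sum_j F j.
Proof. by move=> h; rewrite (bigD1 i) //= lerDl sumr_ge0. Qed.

Theorem mainTheorem14 (R : realType) (J : finType) (d : nat) (H : {set {set J}})
    (C1 : R) (CK : nat -> R) :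
  exists C0 : R,
  forall (eps : R) (I : interval R),
  exists Mb : nat,
  forall sig : R,
  exists (Md : nat) (Mc : R),
  forall (V : nat -> J -> nat) (nu : forall (n : nat) (e : {set J}), Ve V n e -> R),
    hypergraph_system d H ->
    (forall n j, (0 < V n j)%N) ->
    pseudorandom H nu C1 CK ->
    forall e : {set J}, e \in H ->
    0 < eps < 1 -> 0 < sig < 1 / 2 ->
    (exists a b : R, forall y, y \in I -> a <= y <= b) ->
    exists N0 : nat, forall n : nat, (N0 <= n)%N ->
    forall G : Ve V n e -> R, (forall x, G x \in I) ->
    exists B : {set {set Ve V n e}},
      sigma_algebra B /\
      (* (a) *)
      (forall B' : {set {set Ve V n e}}, sigma_algebra B' ->
         forall x, `|G x - condE (join_sa B B') G x| <= eps) /\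
      (* (b) *)
      (#|atoms B| <= Mb)%N /\
      (* (c) *)
      (forall A : {set Ve V n e}, is_atom B A ->
         exists P : {poly R},
           (size P <= Md.+1)%N /\
           (forall i : nat, `|P`_i| <= Mc) /\
           (forall y, y \in I -> `|P.[y]| <= C0) /\
           avg (fun x : Ve V n e => `|(x \in A)%:R - P.[G x]| * (nu n e x + 1))
             <= C0 * sig).
Proof.
exists 12 => eps I.
case: (classic (exists a b : R, forall y, y \in I -> a <= y <= b)) => [[a [b hab]] | nI]; last first.
  exists 0%N => sig; exists 0%N, 0 => V nu _ _ _ e _ _ _ hI.
  by exfalso; apply: nI.
pose L := b - a + 1.
pose M := (Num.truncn (2 * L / eps)).+1.
exists M => sig.
pose W := (Num.truncn (1 / sig)).+1.
have M0 : (0 < M)%N by [].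
have W0 : (0 < W)%N by [].
case: (boolP (0 < sig)) => hsig; last first.
  exists 0%N, 0 => V nu _ _ _ e _ _ /andP[hs _].
  by case/negP: hsig.
have hdl : 0 < dl R M W / 2 by rewrite divr_gt0 // dl_gt0.
have [K hK] := step_exists hdl hsig.
pose Pf (p : 'I_M * 'I_W * 'I_W) := SP a L M W K p.1.1 p.1.2 - SP a L M W K (p.1.1).+1 p.2.
pose Md := \max_(p : 'I_M * 'I_W * 'I_W) size (Pf p).
pose Mc := \sum_(p : 'I_M * 'I_W * 'I_W) \sum_(j < Md.+1) `|(Pf p)`_j|.
exists Md, Mc.
move=> V nu _ hV hpr e he /andP[heps0 heps1] /andP[hsig0 hsig1] _.
case: hpr => [[hnu0 hnu1] _].
have [N0 hN0] := hnu1 e he 1 ltr01.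
exists N0 => n hn G hG.
have x0 : Ve V n e := finfun (fun j => Ordinal (hV n (sval j))).
have hTpos : (0 < #|Ve V n e|)%N by apply/card_gt0P; exists x0.
have hGab : forall x, a <= G x <= b by move=> x; apply: hab; apply: hG.
have hL : 0 < L by rewrite /L; case/andP: (hGab x0) => ? ?; lra.
pose tx := fun x => (G x - a) / L.
have t0 : forall x, 0 <= tx x.
  by move=> x; rewrite /tx divr_ge0 ?(ltW hL) //; case/andP: (hGab x) => ? ?; lra.
have t1 : forall x, tx x < 1.
  move=> x; rewrite /tx ltr_pdivrMr // mul1r; case/andP: (hGab x) => ? ?; rewrite /L; lra.
pose w := fun x => nu n e x + 1.
have hw : forall x, 0 <= w x by move=> x; rewrite /w; have := hnu0 n e x; lra.
have htot : avg w <= 3.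
  have h1 := hN0 n hn; move: h1; rewrite ler_norml => /andP[_ h1].
  have e1 : avg w = avg (nu n e) + 1.
    rewrite /w (avgD (nu n e) (fun=> 1)); congr (_ + _).
    by rewrite /avg sumr_const divff // pnatr_eq0 -lt0n.
  rewrite e1; lra.
pose ch := fun k => odflt (Ordinal W0) [pick i : 'I_W | mass M W tx w k i <= 3 / W%:R].
have hch : forall j, mass M W tx w j (ch j) <= 3 / W%:R.
  move=> j; rewrite /ch; case: pickP => [i //|hnone] /=.
  have [i hi] := pigeon M0 W0 tx hw htot j.
  by move: (hnone i); rewrite hi.
exists (Bsa M tx ch); split; first exact: Bsa_sigma.
split.
  move=> B' _ x; have [k hk] := part M0 W0 tx ch x.
  apply: (condE_close (A := Aset M tx ch k)) => //.
    by apply: join_mem; apply: Aset_in_B.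
  move=> y hy.
  have /andP[hx1 hx2] := osc M0 W0 t0 t1 hk.
  have /andP[hy1 hy2] := osc M0 W0 t0 t1 hy.
  have hM : (0 : R) < M%:R by rewrite ltr0n.
  have hMr : 2 * L / eps < M%:R by apply: truncnS_gt.
  have hLe : L * (2 / M%:R) <= eps.
    rewrite mulrA ler_pdivrMr //; move: hMr; rewrite ltr_pdivrMr // => h; lra.
  have e2 : (k.+2)%:R / M%:R = k%:R / M%:R + 2 / M%:R :> R.
    by rewrite -mulrDl -natrD addn2.
  rewrite e2 in hx2 hy2.
  have eG : G x - G y = L * (tx x - tx y) by rewrite /tx; field; exact: lt0r_neq0.
  rewrite eG normrM (gtr0_norm hL).
  apply: le_trans hLe; apply: ler_wpM2l; first exact: ltW.
  rewrite ler_norml; apply/andP; split; lra.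
split; first exact: card_atoms.
move=> A hA; have [k ->] := atoms_B M0 W0 hA.
pose p : 'I_M * 'I_W * 'I_W := (k, ch k, ch k.+1).
have hLn : L != 0 by exact: lt0r_neq0.
have PE : forall y, (Pf p).[y] = stepv M ch K k ((y - a) / L) - stepv M ch K k.+1 ((y - a) / L).
  by move=> y; rewrite /Pf /= hornerD hornerN !SPE.
exists (Pf p); split; first by apply: leq_trans (leq_bigmax p) (leqnSn _).
split.
  move=> j; case: (ltnP j Md.+1) => hj.
    have h1 : `|(Pf p)`_j| <= \sum_(j0 < Md.+1) `|(Pf p)`_j0|.
      by rewrite (bigD1 (Ordinal hj)) //= lerDl sumr_ge0.
    have h2 : \sum_(j0 < Md.+1) `|(Pf p)`_j0| <= Mc.
      rewrite /Mc (bigD1 p) //= lerDl; apply: sumr_ge0 => q _; exact: sumr_ge0.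
    exact: le_trans h1 h2.
  rewrite nth_default; last first.
    by apply: leq_trans _ hj; apply: leq_trans (leq_bigmax p) (leqnSn _).
  rewrite normr0; apply: sumr_ge0 => q _; apply: sumr_ge0 => ? _; exact: normr_ge0.
split.
  move=> y hy; rewrite PE.
  have ht : 0 <= (y - a) / L <= 1.
    have /andP[ha hb] := hab y hy.
    apply/andP; split; first by rewrite divr_ge0 ?(ltW hL) //; lra.
    by rewrite ler_pdivrMr // mul1r /L; lra.
  have /andP[s1 s2] := stepv_bd M0 W0 ch K k ht.
  have /andP[s3 s4] := stepv_bd M0 W0 ch K k.+1 ht.
  rewrite ler_norml; apply/andP; split; lra.
have hW : (0 : R) < W%:R by rewrite ltr0n.
have hWr : 1 / sig < W%:R by apply: truncnS_gt.
have hWs : 6 / W%:R <= 6 * sig.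
  rewrite ler_pdivrMr //; move: hWr; rewrite ltr_pdivrMr // => h; lra.
apply: le_trans (_ : 6 * sig + 6 / W%:R <= 12 * sig); last by lra.
apply: le_trans (atom_err M0 W0 t0 t1 hw htot hsig hK k hch).
apply: avg_le => x; rewrite PE; exact: lexx.
Qed.
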